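(* Let $R$ be a unital associative ring and let $J=J_2\circ J_1$ act on $M_3(R)$. Then the domain of $J^n$ does not depend on $n$ for $n\geq 2$. For $n\geq 2$, ${\rm dom}(J^n)={\rm dom}(J)\cap{\rm dom}(J^{-1})$, and $M\in M_3(R)$ belongs to ${\rm dom}(J^n)$ if and only if all square submatrices of $M$ and of $J_2(M)$ are invertible.
   Context: $R^*$ denotes the units of $R$. $M_n^*(R)$ is the set of invertible $n\times n$ matrices over $R$, and $M_n^\star(R)$ the set of $n\times n$ matrices all of whose entries are in $R^*$. $J_1(M)=M^{-1}$ with domain $M_n^*(R)$; $J_2(M)_{jk}=(M_{kj})^{-1}$ with domain $M_n^\star(R)$. Compositions $g\circ f$ have domain $\{x\in{\rm dom}(f):f(x)\in{\rm dom}(g)\}$; $J^n$ is the $n$-fold composition. $J^{-1}:=J_1\circ J_2$, with domain $\{M\in M_n^\star(R): J_2(M)\in M_n^*(R)\}$. *)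

(* Defs.v *)
(* Partial maps are represented by their graphs (relations); all maps
   used below are functional (inverses are unique), so the domain of a
   composition is exactly as in the paper. *)
From HB Require Import structures.
From mathcomp Require Import all_boot all_order all_algebra.
Set Implicit Arguments. Unset Strict Implicit. Unset Printing Implicit Defensive.
Import GRing.Theory.
Local Open Scope ring_scope.

Definition pmap (A B : Type) := A -> B -> Prop.
Definition dom (A B : Type) (f : pmap A B) (x : A) : Prop := exists y, f x y.
Definition pcomp (A B C : Type) (g : pmap B C) (f : pmap A B) : pmap A C :=
  fun x z => exists y, f x y /\ g y z.
Fixpoint piter (A : Type) (n : nat) (f : pmap A A) : pmap A A :=
  match n with
  | 0 => fun x y => x = y
  | n'.+1 => pcomp f (piter n' f)
  end.

Section Defs.
Variable R : pzRingType.

Definition mx_invertible (k : nat) (A : 'M[R]_k) : Prop :=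
  exists B : 'M[R]_k, A *m B = 1%:M /\ B *m A = 1%:M.

Definition J1 (k : nat) : pmap 'M[R]_k 'M[R]_k :=
  fun M N => M *m N = 1%:M /\ N *m M = 1%:M.

Definition J2 (k : nat) : pmap 'M[R]_k 'M[R]_k :=
  fun M N => forall i j : 'I_k, M j i * N i j = 1 /\ N i j * M j i = 1.

Definition J (k : nat) : pmap 'M[R]_k 'M[R]_k := pcomp (@J2 k) (@J1 k).
Definition Jinv (k : nat) : pmap 'M[R]_k 'M[R]_k := pcomp (@J1 k) (@J2 k).

Definition all_sq_submx_invertible (m : nat) (M : 'M[R]_m) : Prop :=
  forall (k : nat) (f g : 'I_k -> 'I_m),
    (0 < k)%N ->
    (forall i j : 'I_k, (i < j)%N -> (f i < f j)%N) ->
    (forall i j : 'I_k, (i < j)%N -> (g i < g j)%N) ->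
    mx_invertible (mxsub f g M).

End Defs.

(* Main.v *)
Require Import Defs.
From mathcomp Require Import all_boot all_order all_algebra zify.
From Stdlib Require Import ClassicalEpsilon.
Set Implicit Arguments. Unset Strict Implicit. Unset Printing Implicit Defensive.
Import GRing.Theory.
Local Open Scope ring_scope.

Section Units.
Variable R : pzRingType.
Implicit Types x y z : R.

Definition isu x := exists y, x * y = 1 /\ y * x = 1.
Definition uinv x : R := epsilon (inhabits 0) (fun y => x * y = 1 /\ y * x = 1).
Lemma uinvP x : isu x -> x * uinv x = 1 /\ uinv x * x = 1.
Proof. by move=> H; apply: (epsilon_spec (inhabits 0) _ H). Qed.
Lemma mulrV' x : isu x -> x * uinv x = 1. Proof. by case/uinvP. Qed.
Lemma mulVr' x : isu x -> uinv x * x = 1. Proof. by case/uinvP. Qed.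
Lemma inv_uniq x y z : x * y = 1 -> z * x = 1 -> y = z.
Proof. by move=> h1 h2; rewrite -[y]mul1r -h2 -mulrA h1 mulr1. Qed.
Lemma uinvE x y : x * y = 1 -> y * x = 1 -> uinv x = y.
Proof.
move=> h1 h2; have hx : isu x by exists y.
by apply: (inv_uniq (mulrV' hx) h2).
Qed.
Lemma isu_uinv x : isu x -> isu (uinv x).
Proof. by move=> h; exists x; rewrite mulrV' // mulVr'. Qed.
Lemma uinvK x : isu x -> uinv (uinv x) = x.
Proof. by move=> h; apply: uinvE; [rewrite mulVr'|rewrite mulrV']. Qed.
Lemma isu1 : isu (1 : R). Proof. by exists 1; rewrite mulr1. Qed.
Lemma isuM x y : isu x -> isu y -> isu (x * y).
Proof.
move=> hx hy; exists (uinv y * uinv x); split.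
  by rewrite mulrA -(mulrA x) mulrV' // mulr1 mulrV'.
by rewrite mulrA -(mulrA (uinv y)) mulVr' // mulr1 mulVr'.
Qed.
Lemma uinvM x y : isu x -> isu y -> uinv (x * y) = uinv y * uinv x.
Proof.
move=> hx hy; apply: uinvE.
  by rewrite mulrA -(mulrA x) mulrV' // mulr1 mulrV'.
by rewrite mulrA -(mulrA (uinv y)) mulVr' // mulr1 mulVr'.
Qed.
Lemma isuN x : isu x -> isu (- x).
Proof. by case=> y [h1 h2]; exists (- y); rewrite !mulrNN. Qed.
Lemma uinvN x : isu x -> uinv (- x) = - uinv x.
Proof. by move=> h; apply: uinvE; rewrite mulrNN ?mulrV' ?mulVr'. Qed.
Lemma isuNE x : isu (- x) -> isu x.
Proof. by move/isuN; rewrite opprK. Qed.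
Lemma isu_mid x y z : isu x -> isu z -> isu (x * y * z) -> isu y.
Proof.
move=> hx hz h.
have -> : y = uinv x * (x * y * z) * uinv z.
  by rewrite !mulrA mulVr' // mul1r -mulrA mulrV' // mulr1.
by apply: isuM; [apply: isuM => //; apply: isu_uinv|apply: isu_uinv].
Qed.
End Units.
Section Blocks.
Variable R : pzRingType.
Variables m n : nat.
Implicit Types (a p ai : 'M[R]_m) (d s di w : 'M[R]_n) (b q : 'M[R]_(m,n)) (c r : 'M[R]_(n,m)).

Lemma blk_eqs a b c d p q r s :
  block_mx a b c d *m block_mx p q r s = 1%:M ->
  [/\ a *m p + b *m r = 1%:M, a *m q + b *m s = 0,
      c *m p + d *m r = 0 & c *m q + d *m s = 1%:M].
Proof.
by rewrite mulmx_block (scalar_mx_block m n) => /eq_block_mx [-> -> -> ->].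
Qed.

Lemma solve_l k l (a ai : 'M[R]_l) (x y : 'M[R]_(l,k)) : ai *m a = 1%:M -> a *m x + y = 0 -> x = - (ai *m y).
Proof.
move=> h e; have : ai *m (a *m x + y) = 0 by rewrite e mulmx0.
by rewrite mulmxDr mulmxA h mul1mx => /eqP; rewrite addr_eq0 => /eqP.
Qed.

Lemma block_ul a ai b c d p q r s :
  a *m ai = 1%:M -> ai *m a = 1%:M ->
  block_mx a b c d *m block_mx p q r s = 1%:M ->
  block_mx p q r s *m block_mx a b c d = 1%:M ->
  [/\ (d - c *m ai *m b) *m s = 1%:M, s *m (d - c *m ai *m b) = 1%:M,
      q = - (ai *m b *m s), r = - (s *m c *m ai) &
      p = ai + ai *m b *m s *m c *m ai].
Proof.
move=> h1 h2 /blk_eqs [e1 e2 e3 e4] /blk_eqs [f1 f2 f3 f4].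
have hq : q = - (ai *m b *m s).
  by rewrite (solve_l h2 e2) mulmxA.
have hr : r = - (s *m c *m ai).
  have : (r *m a + s *m c) *m ai = 0 by rewrite f3 mul0mx.
  rewrite mulmxDl -mulmxA h1 mulmx1 => /eqP; rewrite addr_eq0 => /eqP ->.
  by rewrite ?mulNmx.
split => //.
- by rewrite mulmxBl -e4 hq mulmxN !mulmxA addrC.
- by rewrite mulmxBr -f4 hr mulNmx !mulmxA addrC.
- have : (p *m a + q *m c) *m ai = ai by rewrite f1 mul1mx.
  rewrite mulmxDl -mulmxA h1 mulmx1 hq !mulNmx => /eqP.
  rewrite subr_eq => /eqP ->.
  by rewrite ?mulmxA.
Qed.

Lemma block_lr a b c d di p q r s :
  d *m di = 1%:M -> di *m d = 1%:M ->
  block_mx a b c d *m block_mx p q r s = 1%:M ->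
  block_mx p q r s *m block_mx a b c d = 1%:M ->
  (a - b *m di *m c) *m p = 1%:M /\ p *m (a - b *m di *m c) = 1%:M.
Proof.
move=> h1 h2 /blk_eqs [e1 e2 e3 e4] /blk_eqs [f1 f2 f3 f4].
have hr : r = - (di *m c *m p).
  by rewrite (solve_l h2 (etrans (addrC _ _) e3)) mulmxA.
have hq : q = - (p *m b *m di).
  have : (p *m b + q *m d) *m di = 0 by rewrite f2 mul0mx.
  rewrite mulmxDl -[q *m d *m di]mulmxA h1 mulmx1 => /eqP; rewrite addrC addr_eq0 => /eqP ->.
  by rewrite ?mulNmx.
split.
- by rewrite mulmxBl -e1 hr mulmxN !mulmxA addrC.
- by rewrite mulmxBr -f1 hq mulNmx !mulmxA addrC.
Qed.

Lemma block_bwd a ai b c d w :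
  a *m ai = 1%:M -> ai *m a = 1%:M ->
  (d - c *m ai *m b) *m w = 1%:M -> w *m (d - c *m ai *m b) = 1%:M ->
  let Z := block_mx (ai + ai *m b *m w *m c *m ai) (- (ai *m b *m w))
                    (- (w *m c *m ai)) w in
  block_mx a b c d *m Z = 1%:M /\ Z *m block_mx a b c d = 1%:M.
Proof.
move=> h1 h2 g1 g2 Z; rewrite /Z !mulmx_block (scalar_mx_block m n).
rewrite mulmxBl ?mulmxA in g1; rewrite mulmxBr ?mulmxA in g2.
split; congr block_mx.
- by rewrite mulmxDr mulmxN !mulmxA h1 !mul1mx addrK.
- by rewrite mulmxN !mulmxA h1 mul1mx addNr.
- rewrite mulmxDr !mulmxN !mulmxA.
  by rewrite -{1}[c *m ai]mul1mx -g1 mulmxBl !mulmxA subrK subrr.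
- by rewrite mulmxN !mulmxA addrC.
- by rewrite mulmxDl mulNmx -[_ *m ai *m a]mulmxA h2 mulmx1 addrK.
- rewrite mulmxDl mulNmx -{1}[ai *m b]mulmx1 -g2 mulmxBr !mulmxA.
  by rewrite subrK subrr.
- by rewrite mulNmx -mulmxA h2 mulmx1 addNr.
- by rewrite mulNmx addrC.
Qed.
End Blocks.

Section Perm.
Variable R : pzRingType.

Definition pm n (f g : 'I_n -> 'I_n) (X : 'M[R]_n) : 'M[R]_n :=
  \matrix_(i, j) X (f i) (g j).

Lemma pm_mul n (f g h : 'I_n -> 'I_n) (X Y : 'M[R]_n) :
  injective h -> pm f h X *m pm h g Y = pm f g (X *m Y).
Proof.
move=> hi; apply/matrixP => i j; rewrite !mxE [RHS](reindex_inj hi) /=.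
by apply: eq_bigr => k _; rewrite !mxE.
Qed.

Lemma pm1 n (f : 'I_n -> 'I_n) : injective f -> pm f f (1%:M : 'M[R]_n) = 1%:M.
Proof. by move=> fi; apply/matrixP => i j; rewrite !mxE (inj_eq fi). Qed.

Lemma pm_inv n (f g : 'I_n -> 'I_n) (X Y : 'M[R]_n) :
  injective f -> injective g -> X *m Y = 1%:M -> Y *m X = 1%:M ->
  pm f g X *m pm g f Y = 1%:M /\ pm g f Y *m pm f g X = 1%:M.
Proof. by move=> fi gi h1 h2; rewrite !pm_mul // h1 h2 !pm1. Qed.

Definition sgm n (j : 'I_n.+1) (r : 'I_n.+1) : 'I_n.+1 :=
  if unlift ord0 r is Some k then lift j k else j.

Lemma sig0 n (j : 'I_n.+1) : sgm j ord0 = j.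
Proof. by rewrite /sgm unlift_none. Qed.
Lemma sigL n (j : 'I_n.+1) k : sgm j (lift ord0 k) = lift j k.
Proof. by rewrite /sgm liftK. Qed.
Lemma sig_inj n (j : 'I_n.+1) : injective (sgm j).
Proof.
move=> r1 r2; rewrite /sgm.
case: (unliftP ord0 r1) => [k1 ->|->]; case: (unliftP ord0 r2) => [k2 ->|->] //.
- by move/lift_inj ->.
- by move=> e; have := neq_lift j k1; rewrite e eqxx.
- by move=> e; have := neq_lift j k2; rewrite -e eqxx.
Qed.

Lemma rshift1 n (k : 'I_n) : (rshift 1 k : 'I_(1 + n)) = lift ord0 k.
Proof. by apply: val_inj. Qed.
Lemma lshift0 n (k : 'I_1) : (lshift n k : 'I_(1 + n)) = ord0.
Proof. by apply: val_inj; rewrite /= ord1. Qed.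

Lemma mx1_eq (a b : 'M[R]_1) : a ord0 ord0 = b ord0 ord0 -> a = b.
Proof. by move=> e; apply/matrixP => i j; rewrite !ord1. Qed.
Lemma mul11 (a b : 'M[R]_1) : (a *m b) ord0 ord0 = a ord0 ord0 * b ord0 ord0.
Proof. by rewrite mxE big_ord1. Qed.

Lemma inv11 (a : 'M[R]_1) : mx_invertible a <-> isu (a ord0 ord0).
Proof.
split.
  case=> b [h1 h2]; exists (b ord0 ord0).
  by rewrite -!mul11 h1 h2 mxE.
case=> y [h1 h2]; exists (y%:M); split; apply: mx1_eq;
  by rewrite mul11 !mxE /= ?mulr1n.
Qed.
End Perm.

Section Schur.
Variable R : pzRingType.
Variable n : nat.
Implicit Types X Y : 'M[R]_(1 + n).

Definition schurM X : 'M[R]_n :=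
  drsubmx X - dlsubmx X *m (uinv (X ord0 ord0))%:M *m ursubmx X.

Lemma ul00 X : ulsubmx X ord0 ord0 = X ord0 ord0.
Proof. by rewrite !mxE !lshift0. Qed.

Lemma ul_inv X : isu (X ord0 ord0) ->
  ulsubmx X *m (uinv (X ord0 ord0))%:M = 1%:M /\
  (uinv (X ord0 ord0))%:M *m ulsubmx X = 1%:M.
Proof.
move=> h; split; apply: mx1_eq; rewrite mul11 !mxE /= !mulr1n lshift0.
  by rewrite mulrV'.
by rewrite mulVr'.
Qed.

Lemma schur_inv X Y : X *m Y = 1%:M -> Y *m X = 1%:M -> isu (X ord0 ord0) ->
  let ai := (uinv (X ord0 ord0))%:M in
  [/\ schurM X *m drsubmx Y = 1%:M, drsubmx Y *m schurM X = 1%:M,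
      ursubmx Y = - (ai *m ursubmx X *m drsubmx Y),
      dlsubmx Y = - (drsubmx Y *m dlsubmx X *m ai) &
      ulsubmx Y = ai + ai *m ursubmx X *m drsubmx Y *m dlsubmx X *m ai].
Proof.
move=> h1 h2 hu ai; have [g1 g2] := ul_inv hu.
rewrite -(submxK X) -(submxK Y) in h1 h2.
exact: (block_ul g1 g2 h1 h2).
Qed.

Lemma schur_iff X : isu (X ord0 ord0) ->
  mx_invertible X <-> mx_invertible (schurM X).
Proof.
move=> hu; have [g1 g2] := ul_inv hu; split.
  case=> Y [h1 h2]; have [e1 e2 _ _ _] := schur_inv h1 h2 hu.
  by exists (drsubmx Y).
case=> w [h1 h2]; have [e1 e2] := block_bwd g1 g2 h1 h2.
by rewrite submxK in e1 e2; eexists; split; [exact: e1|exact: e2].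
Qed.

Lemma schurME X k l : schurM X k l =
  X (lift ord0 k) (lift ord0 l) - X (lift ord0 k) ord0 * uinv (X ord0 ord0) * X ord0 (lift ord0 l).
Proof.
rewrite !mxE big_ord1 !mxE big_ord1 !mxE /= mulr1n !rshift1 !lshift0.
by [].
Qed.

Lemma jac_formula X Y (i j : 'I_(1 + n)) :
  X *m Y = 1%:M -> Y *m X = 1%:M -> isu (Y i j) ->
  schurM (pm (sgm i) (sgm j) Y) *m mxsub (lift j) (lift i) X = 1%:M /\
  mxsub (lift j) (lift i) X *m schurM (pm (sgm i) (sgm j) Y) = 1%:M.
Proof.
move=> h1 h2 hu.
have [k1 k2] := pm_inv (@sig_inj n j) (@sig_inj n i) h1 h2.
have hu' : isu (pm (sgm i) (sgm j) Y ord0 ord0) by rewrite mxE !sig0.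
have [e1 e2 _ _ _] := schur_inv k2 k1 hu'.
have -> : mxsub (lift j) (lift i) X = drsubmx (pm (sgm j) (sgm i) X : 'M_(1 + n)).
  by apply/matrixP => k l; rewrite !mxE !rshift1 !sigL.
by split.
Qed.

Lemma jacobi X Y (i j : 'I_(1 + n)) :
  X *m Y = 1%:M -> Y *m X = 1%:M ->
  isu (Y i j) <-> mx_invertible (mxsub (lift j) (lift i) X).
Proof.
move=> h1 h2; split.
  by move=> hu; have [e1 e2] := jac_formula h1 h2 hu; eexists; split; eauto.
have [k1 k2] := pm_inv (@sig_inj n j) (@sig_inj n i) h1 h2.
have -> : mxsub (lift j) (lift i) X = drsubmx (pm (sgm j) (sgm i) X : 'M_(1 + n)).
  by apply/matrixP => k l; rewrite !mxE !rshift1 !sigL.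
case=> di [d1 d2].
rewrite -(submxK (pm (sgm j) (sgm i) X : 'M_(1 + n))) -(submxK (pm (sgm i) (sgm j) Y : 'M_(1+n))) in k1 k2.
have [e1 e2] := @block_lr R 1 n _ _ _ _ di _ _ _ _ d1 d2 k1 k2.
have : mx_invertible (ulsubmx (pm (sgm i) (sgm j) Y : 'M_(1+n))) by eexists; split; eauto.
by move/inv11; rewrite ul00 mxE !sig0.
Qed.
End Schur.

Section Scalars.
Variable R : pzRingType.
Implicit Types (x y z u v m a b c d mi ua ub va vb taa tab tba tbb : R).

Lemma mulrVK' x y : isu x -> y * x * uinv x = y.
Proof. by move=> h; rewrite -mulrA mulrV' // mulr1. Qed.
Lemma mulrKV' x y : isu x -> y * uinv x * x = y.
Proof. by move=> h; rewrite -mulrA mulVr' // mulr1. Qed.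

Lemma scal_lem x u v y : isu u -> isu v ->
  x - uinv u * y * uinv v = uinv u * (u * x * v - y) * uinv v.
Proof.
move=> hu hv; rewrite mulrBr mulrBl !mulrA mulVr' // mul1r.
by rewrite mulrVK'.
Qed.

Lemma smD n x y : (x + y)%:M = x%:M + y%:M :> 'M[R]_n.
Proof. by apply/matrixP => i j; rewrite !mxE mulrnDl. Qed.
Lemma smN n x : (- x)%:M = - x%:M :> 'M[R]_n.
Proof. by apply/matrixP => i j; rewrite !mxE mulNrn. Qed.
Lemma smB n x y : (x - y)%:M = x%:M - y%:M :> 'M[R]_n.
Proof. by rewrite smD smN. Qed.
Lemma sm_inj x y : x%:M = y%:M :> 'M[R]_1 -> x = y.
Proof. by move/matrixP/(_ ord0 ord0); rewrite !mxE /= !mulr1n. Qed.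

Lemma blk2 a b c d : isu a -> isu d -> isu (d - c * uinv a * b) ->
  let p := uinv a + uinv a * b * uinv (d - c * uinv a * b) * c * uinv a in
  (a - b * uinv d * c) * p = 1 /\ p * (a - b * uinv d * c) = 1.
Proof.
move=> ha hd hs p.
set w := uinv (d - c * uinv a * b).
have h1 : a%:M *m (uinv a)%:M = 1%:M :> 'M[R]_1 by rewrite -scalar_mxM mulrV'.
have h2 : (uinv a)%:M *m a%:M = 1%:M :> 'M[R]_1 by rewrite -scalar_mxM mulVr'.
have g1 : (d%:M - c%:M *m (uinv a)%:M *m b%:M) *m w%:M = 1%:M :> 'M[R]_1.
  by rewrite -!scalar_mxM -smB -scalar_mxM mulrV'.
have g2 : w%:M *m (d%:M - c%:M *m (uinv a)%:M *m b%:M) = 1%:M :> 'M[R]_1.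
  by rewrite -!scalar_mxM -smB -scalar_mxM mulVr'.
have [e1 e2] := block_bwd h1 h2 g1 g2.
have d1 : d%:M *m (uinv d)%:M = 1%:M :> 'M[R]_1 by rewrite -scalar_mxM mulrV'.
have d2 : (uinv d)%:M *m d%:M = 1%:M :> 'M[R]_1 by rewrite -scalar_mxM mulVr'.
have [f1 f2] := block_lr d1 d2 e1 e2.
rewrite -!scalar_mxM -smD -smB -scalar_mxM in f1.
rewrite -!scalar_mxM -smD -smB -scalar_mxM in f2.
by split; apply: sm_inj.
Qed.

Lemma acl (A B C D E : R) : A + B + (C + D) - (A + B + (C + E)) = - (E - D).
Proof.
by rewrite opprD addrACA subrr add0r opprD addrACA subrr add0r opprB.
Qed.

Lemma wlem mi ua ub va vb taa tab tba tbb : isu taa ->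
  (- (mi * (ua * taa + ub * tba))) * uinv taa * (- ((taa * va + tab * vb) * mi))
  - (mi + mi * ((ua * taa * va + ua * tab * vb) + (ub * tba * va + ub * tbb * vb)) * mi)
  = - (mi + mi * ub * (tbb - tba * uinv taa * tab) * vb * mi).
Proof.
move=> ht.
have E : (ua * taa + ub * tba) * uinv taa * (taa * va + tab * vb)
   - ((ua * taa * va + ua * tab * vb) + (ub * tba * va + ub * tbb * vb))
   = - (ub * (tbb - tba * uinv taa * tab) * vb).
  rewrite !mulrDl !mulrDr ?mulrN ?mulNr !mulrA !(mulrVK' _ ht) !(mulrKV' _ ht).
  by rewrite mulrBl acl.
rewrite mulNr mulrN mulNr opprK.
have -> : mi * (ua * taa + ub * tba) * uinv taa * ((taa * va + tab * vb) * mi)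
   = mi * ((ua * taa + ub * tba) * uinv taa * (taa * va + tab * vb)) * mi.
  by rewrite !mulrA.
rewrite [mi + _]addrC opprD addrA -mulrBl -mulrBr E.
by rewrite mulrN mulNr opprD addrC !mulrA.
Qed.

Lemma uinv3 x y z : isu x -> isu y -> isu z -> uinv (x * y * z) = uinv z * uinv y * uinv x.
Proof.
move=> hx hy hz; rewrite uinvM ?uinvM ?mulrA //; by apply: isuM.
Qed.

Lemma final_lem u0 u1 v0 v1 a0 a1 b0 b1 h00 h01 h10 h11
  P00 P01 P10 P11 N00 N01 N10 N11 :
  isu u0 -> isu u1 -> isu v0 -> isu v1 -> isu a0 -> isu a1 -> isu b0 -> isu b1 ->
  isu h00 -> isu h01 -> isu h10 -> isu h11 ->
  P00 = uinv u0 * - uinv h00 * uinv v0 -> P01 = uinv u0 * - uinv h01 * uinv v1 ->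
  P10 = uinv u1 * - uinv h10 * uinv v0 -> P11 = uinv u1 * - uinv h11 * uinv v1 ->
  N00 = uinv a0 * - h11 * uinv b0 -> N01 = uinv a0 * - h01 * uinv b1 ->
  N10 = uinv a1 * - h10 * uinv b0 -> N11 = uinv a1 * - h00 * uinv b1 ->
  isu (P11 - P10 * uinv P00 * P01) -> isu (N11 - N10 * uinv N00 * N01).
Proof.
move=> hu0 hu1 hv0 hv1 ha0 ha1 hb0 hb1 k00 k01 k10 k11 eP00 eP01 eP10 eP11 eN00 eN01 eN10 eN11.
have iu := @isu_uinv R.
set z := h00 - h10 * uinv h11 * h01.
have eP : P11 - P10 * uinv P00 * P01 = (uinv u1 * uinv h10) * z * (uinv h01 * uinv v1).
  have q1 : isu (- uinv h00) by apply: isuN; apply: iu.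
  rewrite eP00 uinv3; try by [apply: iu | exact: q1].
  rewrite (uinvK hv0) (uinvK hu0) (uinvN (iu _ k00)) (uinvK k00).
  rewrite eP01 eP10 eP11 /z.
  rewrite ?(mulrN, mulNr, opprK) !mulrA !(mulrKV' _ hv0) !(mulrVK' _ hu0).
  rewrite mulrBr !mulrBl !mulrA !(mulrKV' _ k10) !(mulrVK' _ k01).
  by rewrite addrC.
move=> hP; have hz : isu z.
  rewrite eP in hP.
  by apply: (isu_mid _ _ hP); apply: isuM; apply: iu.
have -> : N11 - N10 * uinv N00 * N01 = uinv a1 * - z * uinv b1.
  have q1 : isu (- h11) by apply: isuN.
  rewrite eN00 uinv3; try by [apply: iu | exact: q1].
  rewrite (uinvK hb0) (uinvK ha0) (uinvN k11).
  rewrite eN01 eN10 eN11 /z.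
  rewrite ?(mulrN, mulNr, opprK) !mulrA !(mulrKV' _ hb0) !(mulrVK' _ ha0).
  by rewrite mulrBr mulrBl ?(mulrN, mulNr, opprK) !mulrA opprB addrC.
by apply: isuM; [apply: isuM; [exact: iu | exact: isuN] | exact: iu].
Qed.
End Scalars.

Section Idx.
Variable R : pzRingType.
Implicit Types (m mi x y ua ub va vb taa tab tba tbb : R).

Definition i0 : 'I_2 := ord0.
Definition i1 : 'I_2 := lift ord0 ord0.
Definition bar (k : 'I_2) : 'I_2 := lift k ord0.
Lemma bar0 : bar i0 = i1. Proof. by []. Qed.
Lemma bar1 : bar i1 = i0. Proof. by apply: val_inj. Qed.
Lemma ord2_cases (k : 'I_2) : k = i0 \/ k = i1.
Proof.
case: k => [[|[|//]]] H; [left|right]; by apply: val_inj.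
Qed.
Lemma barK k : bar (bar k) = k.
Proof. by case: (ord2_cases k) => ->; rewrite ?bar0 ?bar1. Qed.

Lemma sum2b (F : 'I_2 -> R) (l : 'I_2) : \sum_(j < 2) F j = F l + F (bar l).
Proof.
rewrite big_ord_recl big_ord1.
by case: (ord2_cases l) => ->; rewrite ?bar0 ?bar1 // addrC.
Qed.

Lemma sum3 (F : 'I_3 -> R) : \sum_(j < 3) F j = F ord0 + \sum_(j < 2) F (lift ord0 j).
Proof. by rewrite big_ord_recl. Qed.

Lemma solve1 m mi x y : mi * m = 1 -> m * x + y = 0 -> x = - (mi * y).
Proof.
move=> h e; have : mi * (m * x + y) = 0 by rewrite e mulr0.
by rewrite mulrDr mulrA h mul1r => /eqP; rewrite addr_eq0 => /eqP.
Qed.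
Lemma solve2 m mi x y : m * mi = 1 -> x * m + y = 0 -> x = - (y * mi).
Proof.
move=> h e; have : (x * m + y) * mi = 0 by rewrite e mul0r.
by rewrite mulrDl -mulrA h mulr1 => /eqP; rewrite addr_eq0 => /eqP.
Qed.
Lemma solve3 m mi x y : m * mi = 1 -> x * m + y = 1 -> x = mi - y * mi.
Proof.
move=> h e; have : (x * m + y) * mi = mi by rewrite e mul1r.
by rewrite mulrDl -mulrA h mulr1 => e2; rewrite -{1}e2 addrK.
Qed.

Lemma wlem2 mi ua ub va vb taa tab tba tbb : isu taa ->
  let al := - (mi * (ua * taa + ub * tba)) in
  let alb := - (mi * (ua * tab + ub * tbb)) in
  let be := - ((taa * va + tab * vb) * mi) in
  al * uinv taa * be - (mi - (al * va + alb * vb) * mi)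
  = - (mi + mi * ub * (tbb - tba * uinv taa * tab) * vb * mi).
Proof.
move=> ht al alb be; rewrite -(@wlem R mi ua ub va vb taa tab tba tbb ht) /al /alb /be.
congr (_ - _); congr (_ + _).
rewrite !mulrDl !mulNr !opprD !opprK !mulrDr !mulrDl !mulrA.
by rewrite addrACA.
Qed.
End Idx.

Section Core.
Variable R : pzRingType.

Definition J2mx n (X : 'M[R]_n) : 'M[R]_n := \matrix_(i, j) uinv (X j i).

Lemma isu3n (x y z : R) : isu x -> isu y -> isu z -> isu (x * - y * z).
Proof. by move=> hx hy hz; apply: isuM => //; apply: isuM => //; apply: isuN. Qed.

Lemma inv2_iff (B : 'M[R]_2) : isu (B i0 i0) ->
  mx_invertible B <-> isu (B i1 i1 - B i1 i0 * uinv (B i0 i0) * B i0 i1).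
Proof.
move=> h; rewrite (@schur_iff R 1 B h) inv11.
by rewrite (@schurME R 1 B).
Qed.

Lemma core (M A : 'M[R]_3) :
  M *m A = 1%:M -> A *m M = 1%:M ->
  (forall i j, isu (M i j)) -> (forall i j, isu (A i j)) ->
  mx_invertible (J2mx M) -> mx_invertible (J2mx A).
Proof.
move=> hMA hAM hM hA.
pose o : 'I_3 := ord0.
pose L : 'I_2 -> 'I_3 := lift ord0.
pose m := M o o; pose mi := uinv m.
have hm : isu m := hM _ _.
have [e1 e2 _ _ _] := @schur_inv R 2 M A hMA hAM hm.
set S := schurM (M : 'M_(1+2)) in e1 e2.
set T := drsubmx (A : 'M_(1+2)) in e1 e2.
have ET l k : T l k = A (L l) (L k) by rewrite /T !mxE !rshift1.
have hT l k : isu (T l k) by rewrite ET.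
have ES l k : S l k = M (L l) (L k) - M (L l) o * mi * M o (L k).
  by rewrite /S (@schurME R 2).
have hS l k : isu (S l k).
  have := (@jacobi R 1 S T (bar k) (bar l) e1 e2).1 (hT _ _).
  move/inv11; rewrite mxE.
  by change (isu (S (bar (bar l)) (bar (bar k))) -> isu (S l k)); rewrite !barK.
clearbody S T.
have hq l k : T (bar l) (bar k) - T (bar l) k * uinv (T l k) * T l (bar k)
              = uinv (S (bar k) (bar l)).
  have [f1 f2] := @jac_formula R 1 S T l k e1 e2 (hT l k).
  have g1 := congr1 (fun X : 'M_1 => X ord0 ord0) f1.
  have g2 := congr1 (fun X : 'M_1 => X ord0 ord0) f2.
  rewrite /= mul11 (@schurME R 1) !mxE !sigL !sig0 /= mulr1n in g1.
  rewrite /= mul11 (@schurME R 1) !mxE !sigL !sig0 /= mulr1n in g2.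
  by apply: esym; apply: uinvE.
have neq1 l : (o == L l) = false by apply: negbTE; apply: neq_lift.
have neq2 l : (L l == o) = false by rewrite eq_sym neq1.
have hal l j : A o (L j) = - (mi * (M o (L l) * T l j + M o (L (bar l)) * T (bar l) j)).
  have : (M *m A) o (L j) = 0 by rewrite hMA mxE neq1.
  rewrite mxE sum3 (sum2b _ l) -!ET => h.
  exact: (solve1 (mulVr' hm) h).
have hbe k l : A (L l) o = - ((T l k * M (L k) o + T l (bar k) * M (L (bar k)) o) * mi).
  have : (A *m M) (L l) o = 0 by rewrite hAM mxE neq2.
  rewrite mxE sum3 (sum2b _ k) -!ET => h.
  exact: (solve2 (mulrV' hm) h).
have ha k : A o o = mi - (A o (L k) * M (L k) o + A o (L (bar k)) * M (L (bar k)) o) * mi.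
  have : (A *m M) o o = 1 by rewrite hAM mxE eqxx.
  rewrite mxE sum3 (sum2b _ k) => h.
  exact: (solve3 (mulrV' hm) h).
pose hh k l := mi + mi * M o (L k) * uinv (S l k) * M (L l) o * mi.
have hP k l : schurM (J2mx M : 'M_(1+2)) k l
              = uinv (M o (L k)) * - uinv (hh k l) * uinv (M (L l) o) /\ isu (hh k l).
  rewrite (@schurME R 2) !mxE uinvK // scal_lem ?hM //.
  have hs : isu (M (L l) (L k) - M (L l) o * uinv m * M o (L k)) by rewrite -ES.
  have [b1 b2] := @blk2 R m (M o (L k)) (M (L l) o) (M (L l) (L k)) hm (hM _ _) hs.
  rewrite -/mi -ES -/(hh k l) in b1 b2.
  have e : uinv (hh k l) = m - M o (L k) * uinv (M (L l) (L k)) * M (L l) o.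
    exact: uinvE.
  split; last by exists (m - M o (L k) * uinv (M (L l) (L k)) * M (L l) o).
  by rewrite e opprB.
have hN k l : schurM (J2mx A : 'M_(1+2)) k l
              = uinv (A o (L k)) * - hh (bar l) (bar k) * uinv (A (L l) o).
  rewrite (@schurME R 2) !mxE uinvK // scal_lem ?hA //.
  congr (_ * _ * _).
  rewrite -ET (ha k) (hal l k) (hal l (bar k)) (hbe k l) /hh -(hq l k).
  exact: wlem2.
have iu := @isu_uinv R.
move=> hPinv.
have hP0 : isu ((J2mx M : 'M_(1+2)) ord0 ord0) by rewrite mxE; apply: iu.
have hN0 : isu ((J2mx A : 'M_(1+2)) ord0 ord0) by rewrite mxE; apply: iu.
apply/(@schur_iff R 2 _ hN0).
move/(@schur_iff R 2 _ hP0): hPinv.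
have [p00 k00] := hP i0 i0. have [p01 k01] := hP i0 i1.
have [p10 k10] := hP i1 i0. have [p11 k11] := hP i1 i1.
have n00 := hN i0 i0. have n01 := hN i0 i1.
have n10 := hN i1 i0. have n11 := hN i1 i1.
rewrite !bar0 !bar1 in n00 n01 n10 n11.
have hS00 : isu (schurM (J2mx M : 'M_(1+2)) i0 i0) by rewrite p00; apply: isu3n => //; apply: iu.
have hN00 : isu (schurM (J2mx A : 'M_(1+2)) i0 i0) by rewrite n00; apply: isu3n => //; apply: iu.
rewrite (inv2_iff hS00) (inv2_iff hN00).
apply: (final_lem _ _ _ _ _ _ _ _ _ _ _ _ p00 p01 p10 p11 n00 n01 n10 n11);
  by apply: iu || by [].
Qed.
End Core.

Section Top.
Variable R : pzRingType.

Lemma J2E n (X N : 'M[R]_n) :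
  J2 X N <-> (forall i j, isu (X i j)) /\ N = J2mx X.
Proof.
split.
  move=> h; have hu : forall i j, isu (X i j).
    by move=> i j; have [h1 h2] := h j i; exists (N j i).
  split => //; apply/matrixP => i j; rewrite mxE.
  by have [h1 h2] := h i j; apply: esym; apply: uinvE.
case=> hu ->; move=> i j; rewrite mxE; exact: uinvP.
Qed.

Lemma domJ2 n (X : 'M[R]_n) : dom (@J2 R n) X <-> forall i j, isu (X i j).
Proof.
split; first by case=> N /J2E [].
by move=> h; exists (J2mx X); apply/J2E.
Qed.

Lemma J1_sym n (X Y : 'M[R]_n) : J1 X Y -> J1 Y X.
Proof. by case=> h1 h2; split. Qed.

Lemma J1_fun n (X Y Z : 'M[R]_n) : J1 X Y -> J1 X Z -> Y = Z.
Proof.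
case=> h1 h2 [g1 g2].
by rewrite -[Y]mulmx1 -g1 mulmxA h2 mul1mx.
Qed.

Lemma J2_fun n (X Y Z : 'M[R]_n) : J2 X Y -> J2 X Z -> Y = Z.
Proof. by move=> /J2E [_ ->] /J2E [_ ->]. Qed.

Lemma J_fun n (X Y Z : 'M[R]_n) : J X Y -> J X Z -> Y = Z.
Proof.
case=> A [h1 h2] [B [g1 g2]].
have e := J1_fun h1 g1; subst B; exact: J2_fun h2 g2.
Qed.

Lemma J_Jinv n (X Y : 'M[R]_n) : J X Y -> Jinv Y X.
Proof.
case=> A [h1 h2]; exists A; split; last exact: J1_sym.
by move=> i j; have [e1 e2] := h2 j i; split.
Qed.

Lemma piterS' (T : Type) n (f : Defs.pmap T T) x z :
  piter n.+1 f x z <-> exists y, f x y /\ piter n f y z.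
Proof.
elim: n x z => [|n IH] x z /=.
  split; first by case=> y [e h]; subst; exists z.
  by case=> y [h e]; subst; exists x.
split.
  case=> y [/IH [w [h1 h2]] h3]; exists w; split => //; by exists y.
case=> y [h1 [w [h2 h3]]]; exists w; split => //; apply/IH; by exists y.
Qed.

Lemma dom_piter1 (T : Type) (f : Defs.pmap T T) x : dom (piter 1 f) x <-> dom f x.
Proof.
split; first by case=> z [y [e h]]; subst; exists z.
by case=> z h; exists z; exists x.
Qed.

Lemma dom_piterS (T : Type) n (f : Defs.pmap T T) x :
  dom (piter n.+1 f) x <-> exists y, f x y /\ dom (piter n f) y.
Proof.
split; first by case=> z /piterS' [y [h1 h2]]; exists y; split => //; exists z.
by case=> y [h1 [z h2]]; exists z; apply/piterS'; exists y.
Qed.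

End Top.

Section Top2.
Variable R : pzRingType.

Lemma pm_invertible n (f g : 'I_n -> 'I_n) (X : 'M[R]_n) :
  injective f -> injective g -> mx_invertible X -> mx_invertible (pm f g X).
Proof.
move=> fi gi [Y [h1 h2]]; have [e1 e2] := pm_inv fi gi h1 h2.
by exists (pm g f Y).
Qed.

Lemma isu_scal (u v x : R) : isu u -> isu v -> isu (uinv u * x * uinv v) <-> isu x.
Proof.
move=> hu hv; split => [h|hx].
  exact: (isu_mid (isu_uinv hu) (isu_uinv hv) h).
by apply: isuM; [apply: isuM => //|]; apply: isu_uinv.
Qed.

Lemma isu_opp (x : R) : isu (- x) <-> isu x.
Proof. by split; [exact: isuNE|exact: isuN]. Qed.

Lemma sigsig (r : 'I_2) : sgm i1 (sgm i1 r) = r.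
Proof.
have e1 : sgm i1 i1 = i0 by rewrite /i1 sigL; apply: val_inj.
have e0 : sgm i1 i0 = i1 by rewrite /i0 sig0.
by case: (ord2_cases r) => ->; rewrite ?e0 ?e1.
Qed.

Lemma inv2_J2 (B : 'M[R]_2) : (forall i j, isu (B i j)) ->
  mx_invertible B <-> mx_invertible (J2mx B).
Proof.
move=> hB.
have si : injective (@sgm 1 i1) by apply: sig_inj.
have eB : mx_invertible B <-> mx_invertible (pm (sgm i1) (sgm i1) B).
  split; first exact: pm_invertible.
  move/(pm_invertible si si).
  by have -> : pm (sgm i1) (sgm i1) (pm (sgm i1) (sgm i1) B) = B
    by apply/matrixP => i j; rewrite !mxE !sigsig.
have h00 : isu (pm (sgm i1) (sgm i1) B i0 i0) by rewrite mxE.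
have j00 : isu (J2mx B i0 i0) by rewrite mxE; apply: isu_uinv.
rewrite eB (inv2_iff h00) (inv2_iff j00) !mxE.
have e1 : sgm i1 i1 = i0 by rewrite /i1 sigL; apply: val_inj.
have e0 : sgm i1 i0 = i1 by rewrite /i0 sig0.
rewrite e1 e0 uinvK // scal_lem // isu_scal //.
by rewrite -isu_opp opprB.
Qed.

Lemma minor_J2 (X : 'M[R]_3) (a b : 'I_3) :
  mxsub (lift a) (lift b) (J2mx X) = J2mx (mxsub (lift b) (lift a) X).
Proof. by apply/matrixP => i j; rewrite !mxE. Qed.

End Top2.

Section Key.
Variable R : pzRingType.

Lemma keyK (M : 'M[R]_3) :
  dom (piter 2 (@J R 3)) M <->
  exists A, J1 M A /\ (forall i j, isu (A i j)) /\ (forall i j, isu (M i j)) /\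
            mx_invertible (J2mx M).
Proof.
split.
  case/dom_piterS => Y [hJ /dom_piter1 [Z hYZ]].
  case: hJ => A [hA1 /J2E [hAu eY]]; subst Y.
  case: hYZ => Ni [[n1 n2] /J2E [hNu _]].
  case: (hA1) => a1 a2.
  have hMu : forall i j, isu (M i j).
    move=> i j; apply/(@jacobi R 2 A M i j a2 a1).
    rewrite inv2_J2; last by move=> a b; rewrite mxE.
    rewrite -minor_J2.
    by apply/(@jacobi R 2 (J2mx A) Ni j i n1 n2).
  exists A; do 3!split => //.
  by apply: (core a2 a1 hAu hMu); exists Ni.
case=> A [[a1 a2] [hAu [hMu hP]]].
have [Ni [n1 n2]] := core a1 a2 hMu hAu hP.
have hNi : forall i j, isu (Ni i j).
  move=> i j; apply/(@jacobi R 2 (J2mx A) Ni i j n1 n2).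
  rewrite minor_J2 -inv2_J2; last by move=> a b; rewrite mxE.
  by apply/(@jacobi R 2 A M j i a2 a1).
apply/dom_piterS; exists (J2mx A); split.
  by exists A; split; [split|apply/J2E].
apply/dom_piter1; exists (J2mx Ni); exists Ni; split; first by split.
by apply/J2E.
Qed.

Lemma domJ (M : 'M[R]_3) :
  dom (@J R 3) M <-> exists A, J1 M A /\ forall i j, isu (A i j).
Proof.
split; first by case=> Y [A [h /J2E [hu _]]]; exists A.
by case=> A [h hu]; exists (J2mx A); exists A; split => //; apply/J2E.
Qed.

Lemma domJinv (M : 'M[R]_3) :
  dom (@Jinv R 3) M <-> (forall i j, isu (M i j)) /\ mx_invertible (J2mx M).
Proof.
split; first by case=> Z [P [/J2E [hu ->] [h1 h2]]]; split => //; exists Z.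
case=> hu [Z [z1 z2]]; exists Z; exists (J2mx M); split; first by apply/J2E.
by split.
Qed.

Lemma claim2 (M : 'M[R]_3) :
  dom (piter 2 (@J R 3)) M <-> dom (@J R 3) M /\ dom (@Jinv R 3) M.
Proof.
rewrite keyK domJ domJinv; split.
  by case=> A [h1 [h2 [h3 h4]]]; split => //; exists A.
by case=> [[A [h1 h2]] [h3 h4]]; exists A.
Qed.

Lemma iter_stab n : (2 <= n)%N -> forall M : 'M[R]_3,
  dom (piter n (@J R 3)) M <-> dom (piter 2 (@J R 3)) M.
Proof.
elim: n => [//|n IH] hn M.
case: (ltnP n 2) => h.
  by have -> : n = 1%N by lia.
split.
  case/dom_piterS => Y [hY /(IH h)] /claim2 [hJY _].
  by apply/dom_piterS; exists Y; split => //; apply/dom_piter1.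
case/dom_piterS => Y [hY /dom_piter1 hJY].
apply/dom_piterS; exists Y; split => //; apply/(IH h)/claim2; split => //.
by exists M; apply: J_Jinv.
Qed.
End Key.

Section Sq.
Variable R : pzRingType.

Definition good (X : 'M[R]_3) :=
  (forall i j, isu (X i j)) /\
  (forall i j : 'I_3, mx_invertible (mxsub (lift i) (lift j) X)) /\
  mx_invertible X.

Lemma ord3v (i : 'I_3) : nat_of_ord i = 0%N \/ nat_of_ord i = 1%N \/ nat_of_ord i = 2%N.
Proof. case: i => [[|[|[|//]]] ?] /=; tauto. Qed.

Lemma lift_incr (i : 'I_3) (a b : 'I_2) : (a < b)%N -> (lift i a < lift i b)%N.
Proof.
move=> hab.
have [-> ->] : a = i0 /\ b = i1.
  move: hab; case: (ord2_cases a) => ->; case: (ord2_cases b) => -> //.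
rewrite /= /bump.
by have [->|[->|->]] := ord3v i.
Qed.

Lemma incr2 (f : 'I_2 -> 'I_3) : (forall a b : 'I_2, (a < b)%N -> (f a < f b)%N) ->
  exists j : 'I_3, forall r, f r = lift j r.
Proof.
move=> hf; have h01 := hf i0 i1 isT; have b1 := ltn_ord (f i1).
have [ha|[ha|ha]] := ord3v (f i0); have [hb|[hb|hb]] := ord3v (f i1);
  try (exfalso; lia).
- exists (@Ordinal 3 2 isT) => r; case: (ord2_cases r) => ->; apply: val_inj;
  by rewrite /= ?ha ?hb.
- exists (@Ordinal 3 1 isT) => r; case: (ord2_cases r) => ->; apply: val_inj;
  by rewrite /= ?ha ?hb.
- exists (@Ordinal 3 0 isT) => r; case: (ord2_cases r) => ->; apply: val_inj;
  by rewrite /= ?ha ?hb.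
Qed.

Lemma incr3 (f : 'I_3 -> 'I_3) : (forall a b : 'I_3, (a < b)%N -> (f a < f b)%N) ->
  forall r, f r = r.
Proof.
move=> hf.
pose o0 : 'I_3 := @Ordinal 3 0 isT.
pose o1 : 'I_3 := @Ordinal 3 1 isT.
pose o2 : 'I_3 := @Ordinal 3 2 isT.
have h01 := hf o0 o1 isT; have h12 := hf o1 o2 isT; have b2 := ltn_ord (f o2).
case=> [[|[|[|//]]] Hr]; apply: val_inj.
- have -> : Ordinal Hr = o0 by apply: val_inj.
  rewrite /=; lia.
- have -> : Ordinal Hr = o1 by apply: val_inj.
  rewrite /=; lia.
- have -> : Ordinal Hr = o2 by apply: val_inj.
  rewrite /=; lia.
Qed.

Lemma allsq_good (X : 'M[R]_3) : all_sq_submx_invertible X <-> good X.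
Proof.
have inc1 : forall (f : 'I_1 -> 'I_3) (a b : 'I_1), (a < b)%N -> (f a < f b)%N.
  by move=> f a b; rewrite (ord1 a) (ord1 b) ltnn.
split.
- move=> h; split; [|split].
  + move=> i j; have := h 1%N (fun _ => i) (fun _ => j) isT (inc1 _) (inc1 _).
    by move/inv11; rewrite mxE.
  + move=> i j; apply: h => //; exact: lift_incr.
  + have := h 3%N id id isT (fun a b h => h) (fun a b h => h).
    by have -> : mxsub id id X = X by apply/matrixP => i j; rewrite mxE.
- case=> hu [hmin hinv] k f g hk hf hg.
  case: k f g hk hf hg => [|[|[|[|k]]]] f g hk hf hg //.
  + by apply/inv11; rewrite mxE; exact: hu.
  + have [j ej] := incr2 hf; have [j' ej'] := incr2 hg.
    have -> : mxsub f g X = mxsub (lift j) (lift j') X.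
      by apply/matrixP => a b; rewrite !mxE ej ej'.
    exact: hmin.
  + have -> : mxsub f g X = X.
      by apply/matrixP => a b; rewrite !mxE (incr3 hf) (incr3 hg).
    exact: hinv.
  + exfalso.
    pose p0 : 'I_k.+4 := @Ordinal k.+4 0 isT.
    pose p1 : 'I_k.+4 := @Ordinal k.+4 1 isT.
    pose p2 : 'I_k.+4 := @Ordinal k.+4 2 isT.
    pose p3 : 'I_k.+4 := @Ordinal k.+4 3 isT.
    have h1 := hf p0 p1 isT; have h2 := hf p1 p2 isT; have h3 := hf p2 p3 isT.
    have h4 := ltn_ord (f p3).
    lia.
Qed.

Lemma keyK_good (M : 'M[R]_3) :
  (exists A, J1 M A /\ (forall i j, isu (A i j)) /\ (forall i j, isu (M i j)) /\
            mx_invertible (J2mx M)) <-> good M /\ good (J2mx M).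
Proof.
split.
  case=> A [[a1 a2] [hAu [hMu hP]]]; split.
    split => //; split; last by exists A.
    by move=> i j; apply/(@jacobi R 2 M A j i a1 a2).
  split; first by move=> i j; rewrite mxE; apply: isu_uinv.
  split => // i j; rewrite minor_J2 -inv2_J2; last by move=> a b; rewrite mxE.
  by apply/(@jacobi R 2 M A i j a1 a2).
case=> [[hu [hmin [A [a1 a2]]]] [_ [_ hP]]].
exists A; split; first by split.
split; first by move=> i j; apply/(@jacobi R 2 M A i j a1 a2).
by split.
Qed.
End Sq.

Theorem proposition1 (R : pzRingType) :
  (forall n m : nat, (2 <= n)%N -> (2 <= m)%N ->
     forall M : 'M[R]_3, dom (piter n (@J R 3)) M <-> dom (piter m (@J R 3)) M) /\
  (forall n : nat, (2 <= n)%N -> forall M : 'M[R]_3,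
     dom (piter n (@J R 3)) M <-> (dom (@J R 3) M /\ dom (@Jinv R 3) M)) /\
  (forall n : nat, (2 <= n)%N -> forall M : 'M[R]_3,
     dom (piter n (@J R 3)) M <->
     (all_sq_submx_invertible M /\
      exists N : 'M[R]_3, J2 M N /\ all_sq_submx_invertible N)).
Proof.
split; [|split].
- by move=> n m hn hm M; rewrite (iter_stab hn) (iter_stab hm).
- by move=> n hn M; rewrite (iter_stab hn); exact: claim2.
- move=> n hn M; rewrite (iter_stab hn) keyK keyK_good !allsq_good.
  split.
    case=> h1 h2; split => //; exists (J2mx M); split; last by apply/allsq_good.
    by apply/J2E; split => //; case: h1.
  move=> [g1 [N [hJ /allsq_good g2]]]; move/J2E: hJ => [_ e]; subst N; by split.
Qed.
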